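(* Let $T=((\Omega,\mathcal{A}),\{(\Omega,\mathcal{M}_i)\}_{i\in N},\{t_i\}_{i\in N})$ be a type space. Then exactly one of the following holds: (a) the players' beliefs in $T$ are consistent; (b) $T$ admits a money pump.
   Context: A field on a set $X$ is a collection of subsets of $X$ containing $X$ and closed under complements and finite intersections. For a field $\mathcal{A}$ on $\Omega$, $\mathrm{pba}(\Omega,\mathcal{A})$ is the set of finitely additive nonnegative $P:\mathcal{A}\to\mathbb{R}$ with $P(\Omega)=1$; $\mathrm{ba}(\Omega,\mathcal{A})$ is the space of bounded finitely additive real set functions on $\mathcal{A}$; $B(\Omega,\mathcal{A})$ is the sup-norm closure of the linear span of indicators of sets in $\mathcal{A}$ (these functions are integrable against every element of $\mathrm{ba}(\Omega,\mathcal{A})$). $\mathrm{ba}(\Omega,\mathcal{A})$ carries the weak* topology, the weakest topology making $\mu\mapsto\int f\,d\mu$ continuous for all $f\in B(\Omega,\mathcal{A})$; $\overline{\,\cdot\,}^\ast$ denotes weak* closure. A type space is $T=((\Omega,\mathcal{A}),\{(\Omega,\mathcal{M}_i)\}_{i\in N},\{t_i\}_{i\in N})$ with $N$ a nonempty set of players, $\Omega$ a set, $\mathcal{A}$ and $\mathcal{M}_i\subseteq\mathcal{A}$ fields on $\Omega$, and $t_i:\Omega\times\mathcal{A}\to[0,1]$ with: $t_i(\omega,\cdot)\in\mathrm{pba}(\Omega,\mathcal{A})$ for all $\omega$; $t_i(\cdot,E)\in B(\Omega,\mathcal{M}_i)$ for all $E\in\mathcal{A}$; $t_i(\omega,E)=1$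 whenever $E\in\mathcal{M}_i$, $\omega\in E$. For $i\in N$ let $\Pi_i=\overline{\mathrm{conv}\{t_i(\omega,\cdot):\omega\in\Omega\}}^\ast$ (equivalently, the set of $P\in\mathrm{pba}(\Omega,\mathcal{A})$ with $P(E\cap F)=\int_F t_i(\cdot,E)\,dP$ for all $E\in\mathcal{A}$, $F\in\mathcal{M}_i$). The players' beliefs are consistent if $\bigcap_{i\in I}\Pi_i\neq\emptyset$ for every finite $I\subseteq N$. For $I\subseteq N$, a nonempty $S\subseteq\Omega$ (not necessarily in $\mathcal{A}$) is an $I$-common certainty component if there is $E\in\mathcal{A}$ with $E\subseteq S$ and $t_i(\omega,E)=1$ for all $\omega\in S$, $i\in I$. A set $E\subseteq\Omega$ is $I$-commonly certain at $\omega$ if there is an $I$-common certainty component $S$ with $\omega\in S\subseteq E$. A semi-bet is a family $(f_i)_{i\in I}\subseteq B(\Omega,\mathcal{A})$ with $I\subseteq N$ finite such that for every $\omega\in\Omega$ the set $\{\omega'\in\Omega:\int f_i\,dt_i(\omega',\cdot)\ge0\ \forall i\in I\}$ is $I$-commonly certain at $\omega$. $T$ admits a money pump if for every $P\in\mathrm{pba}(\Omega,\mathcal{A})$ there is a semi-bet $(f_i)_{i\in I}$ with $\int\sum_{i\in I}f_i\,dP<0$. *)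

(* Defs.v *)
From Stdlib Require Import Reals List ClassicalDescription ClassicalEpsilon.
Import ListNotations.
Open Scope R_scope.

Section TypeSpaces.

Context {Omega : Type}.

Definition set := Omega -> Prop.
Definition setT : set := fun _ => True.
Definition setC (E : set) : set := fun w => ~ E w.
Definition setI (E F : set) : set := fun w => E w /\ F w.
Definition setU (E F : set) : set := fun w => E w \/ F w.

Definition is_field (F : set -> Prop) : Prop :=
  F setT /\ (forall E, F E -> F (setC E)) /\
  (forall E G, F E -> F G -> F (setI E G)).

Definition fin_additive (A : set -> Prop) (mu : set -> R) : Prop :=
  forall E F, A E -> A F -> (forall w, ~ (E w /\ F w)) ->
    mu (setU E F) = mu E + mu F.

Definition ba (A : set -> Prop) (mu : set -> R) : Prop :=
  fin_additive A mu /\ exists K, forall E, A E -> Rabs (mu E) <= K.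

Definition pba (A : set -> Prop) (P : set -> R) : Prop :=
  fin_additive A P /\ (forall E, A E -> 0 <= P E) /\ P setT = 1.

Definition indicator (E : set) (w : Omega) : R :=
  if excluded_middle_informative (E w) then 1 else 0.

Definition simple_eval (l : list (R * set)) (w : Omega) : R :=
  fold_right (fun p acc => fst p * indicator (snd p) w + acc) 0 l.

Definition simple_in (A : set -> Prop) (l : list (R * set)) : Prop :=
  Forall (fun p => A (snd p)) l.

Definition simple_int (mu : set -> R) (l : list (R * set)) : R :=
  fold_right (fun p acc => fst p * mu (snd p) + acc) 0 l.

Definition B_fun (A : set -> Prop) (f : Omega -> R) : Prop :=
  forall eps, 0 < eps -> exists l, simple_in A l /\
    forall w, Rabs (f w - simple_eval l w) <= eps.

Definition is_integral (A : set -> Prop) (mu : set -> R) (f : Omega -> R)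
  (v : R) : Prop :=
  forall eps, 0 < eps -> exists delta, 0 < delta /\
    forall l, simple_in A l ->
      (forall w, Rabs (f w - simple_eval l w) <= delta) ->
      Rabs (simple_int mu l - v) <= eps.

(** int f dmu (well defined and unique for f in B(Omega,A), mu in ba(Omega,A)). *)
Definition integral (A : set -> Prop) (mu : set -> R) (f : Omega -> R) : R :=
  epsilon (inhabits 0) (is_integral A mu f).

(** Weak-star closure in ba(Omega, A) of a set S of set functions:
    every basic weak-star neighbourhood of P meets S. *)
Definition wstar_closure (A : set -> Prop) (S : (set -> R) -> Prop)
  (P : set -> R) : Prop :=
  ba A P /\
  forall fs : list (Omega -> R), Forall (B_fun A) fs ->
  forall eps, 0 < eps -> exists Q, S Q /\
    Forall (fun f => Rabs (integral A P f - integral A Q f) < eps) fs.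

End TypeSpaces.

Section TypeSpaceDefs.

Context {N Omega : Type}.

Definition type_space (A : @set Omega -> Prop) (M : N -> @set Omega -> Prop)
  (t : N -> Omega -> @set Omega -> R) : Prop :=
  inhabited N /\ is_field A /\
  (forall i, is_field (M i)) /\
  (forall i E, M i E -> A E) /\
  (forall i w, pba A (t i w)) /\
  (forall i E, A E -> B_fun (M i) (fun w => t i w E)) /\
  (forall i E w, M i E -> E w -> t i w E = 1).

Definition conv_types (t : N -> Omega -> @set Omega -> R) (i : N)
  (Q : @set Omega -> R) : Prop :=
  exists l : list (R * Omega),
    Forall (fun p => 0 <= fst p) l /\
    fold_right (fun p acc => fst p + acc) 0 l = 1 /\
    forall E, Q E = fold_right (fun p acc => fst p * t i (snd p) E + acc) 0 l.

Definition Pi (A : @set Omega -> Prop) (t : N -> Omega -> @set Omega -> R)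
  (i : N) : (@set Omega -> R) -> Prop :=
  wstar_closure A (conv_types t i).

Definition consistent (A : @set Omega -> Prop) (t : N -> Omega -> @set Omega -> R)
  : Prop :=
  forall I : list N, exists P, forall i, In i I -> Pi A t i P.

Definition cc_component (A : @set Omega -> Prop) (t : N -> Omega -> @set Omega -> R)
  (I : list N) (S : @set Omega) : Prop :=
  (exists w, S w) /\
  exists E, A E /\ (forall w, E w -> S w) /\
    forall w, S w -> forall i, In i I -> t i w E = 1.

Definition commonly_certain (A : @set Omega -> Prop) (t : N -> Omega -> @set Omega -> R)
  (I : list N) (E : @set Omega) (w : Omega) : Prop :=
  exists S, cc_component A t I S /\ S w /\ forall w', S w' -> E w'.

(** (f_i)_{i in I} is a semi-bet (I a finite set of players, listed without
    repetition; only the values f i for i in I matter). *)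
Definition semi_bet (A : @set Omega -> Prop) (t : N -> Omega -> @set Omega -> R)
  (I : list N) (f : N -> Omega -> R) : Prop :=
  NoDup I /\ (forall i, In i I -> B_fun A (f i)) /\
  forall w, commonly_certain A t I
    (fun w' => forall i, In i I -> 0 <= integral A (t i w') (f i)) w.

Definition money_pump (A : @set Omega -> Prop) (t : N -> Omega -> @set Omega -> R)
  : Prop :=
  forall P, pba A P -> exists (I : list N) (f : N -> Omega -> R),
    semi_bet A t I f /\
    integral A P (fun w => fold_right (fun i acc => f i w + acc) 0 I) < 0.

End TypeSpaceDefs.

(* Main.v *)
Require Import Defs.
From Stdlib Require Import Reals List Lra Lia Psatz Classical ClassicalDescription ClassicalEpsilon FunctionalExtensionality PropExtensionality.
From mathcomp Require classical_sets filter.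
Import ListNotations.
Open Scope R_scope.

Lemma set_ext {Omega : Type} (E F : @set Omega) : (forall w, E w <-> F w) -> E = F.
Proof. intros H; apply functional_extensionality; intros w; apply propositional_extensionality; auto. Qed.

Definition sumL {X : Type} (l : list X) (g : X -> R) : R :=
  fold_right (fun x acc => g x + acc) 0 l.

Lemma sumL_nil {X} (g : X -> R) : sumL [] g = 0.
Proof. reflexivity. Qed.
Lemma sumL_cons {X} (x : X) l g : sumL (x :: l) g = g x + sumL l g.
Proof. reflexivity. Qed.
Lemma sumL_app {X} (l1 l2 : list X) g : sumL (l1 ++ l2) g = sumL l1 g + sumL l2 g.
Proof. induction l1; simpl; [lra|]. unfold sumL in *; simpl. rewrite IHl1. lra. Qed.
Lemma sumL_plus {X} (l : list X) g h : sumL l (fun x => g x + h x) = sumL l g + sumL l h.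
Proof. induction l; unfold sumL in *; simpl; [lra|]. rewrite IHl. lra. Qed.
Lemma sumL_scal {X} (l : list X) c g : sumL l (fun x => c * g x) = c * sumL l g.
Proof. induction l; unfold sumL in *; simpl; [lra|]. rewrite IHl. lra. Qed.
Lemma sumL_opp {X} (l : list X) g : sumL l (fun x => - g x) = - sumL l g.
Proof. induction l; unfold sumL in *; simpl; [lra|]. rewrite IHl. lra. Qed.
Lemma sumL_ext {X} (l : list X) g h : (forall x, In x l -> g x = h x) -> sumL l g = sumL l h.
Proof. induction l; intros H; unfold sumL in *; simpl; [lra|]. rewrite IHl, (H a); simpl; auto. intros; apply H; simpl; auto. Qed.
Lemma sumL_le {X} (l : list X) g h : (forall x, In x l -> g x <= h x) -> sumL l g <= sumL l h.
Proof. induction l; intros H; unfold sumL in *; simpl; [lra|].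
  pose proof (H a (or_introl eq_refl)). assert (fold_right (fun x acc => g x + acc) 0 l <= fold_right (fun x acc => h x + acc) 0 l) by (apply IHl; intros; apply H; simpl; auto). lra. Qed.
Lemma sumL_map {X Y} (f : X -> Y) (l : list X) g : sumL (map f l) g = sumL l (fun x => g (f x)).
Proof. induction l; unfold sumL in *; simpl; [lra|]. rewrite IHl. lra. Qed.
Lemma sumL_const {X} (l : list X) c : sumL l (fun _ => c) = INR (length l) * c.
Proof. induction l; unfold sumL in *; simpl fold_right; [simpl; lra|]. rewrite IHl. cbn [length]. rewrite S_INR. lra. Qed.
Lemma sumL_swap {X Y} (l1 : list X) (l2 : list Y) g :
  sumL l1 (fun x => sumL l2 (g x)) = sumL l2 (fun y => sumL l1 (fun x => g x y)).
Proof. induction l1.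
  - rewrite sumL_nil. rewrite (sumL_ext l2 _ (fun _ => 0)) by (intros; apply sumL_nil). rewrite sumL_const; lra.
  - rewrite sumL_cons, IHl1. rewrite <- sumL_plus. apply sumL_ext. intros; rewrite sumL_cons; lra. Qed.
Lemma sumL_abs {X} (l : list X) g : Rabs (sumL l g) <= sumL l (fun x => Rabs (g x)).
Proof. induction l; unfold sumL in *; simpl fold_right.
  - rewrite Rabs_R0; lra.
  - eapply Rle_trans; [apply Rabs_triang|]. lra. Qed.
Lemma sumL_nonneg {X} (l : list X) g : (forall x, In x l -> 0 <= g x) -> 0 <= sumL l g.
Proof. intros H. replace 0 with (sumL l (fun _ => 0)). apply sumL_le; auto.
  rewrite sumL_const; lra. Qed.
Lemma sumL_term {X} (l : list X) g x : (forall y, In y l -> 0 <= g y) -> In x l -> g x <= sumL l g.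
Proof. induction l; intros H Hin; [destruct Hin|]. rewrite sumL_cons. destruct Hin as [->|Hin].
  - assert (0 <= sumL l g) by (apply sumL_nonneg; intros; apply H; simpl; auto). lra.
  - assert (g x <= sumL l g) by (apply IHl; auto; intros; apply H; simpl; auto).
    assert (0 <= g a) by (apply H; simpl; auto). lra. Qed.
Lemma sumL_flat_map {X Y} (k : X -> list Y) l g : sumL (flat_map k l) g = sumL l (fun x => sumL (k x) g).
Proof. induction l; cbn [flat_map]; [reflexivity|]. rewrite sumL_app, IHl, sumL_cons. reflexivity. Qed.

Section Simple.
Context {Omega : Type}.
Implicit Types (E F G : @set Omega) (l : list (R * @set Omega)).

Lemma eval_sumL l w : simple_eval l w = sumL l (fun p => fst p * indicator (snd p) w).
Proof. reflexivity. Qed.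
Lemma int_sumL (mu : @set Omega -> R) l : simple_int mu l = sumL l (fun p => fst p * mu (snd p)).
Proof. reflexivity. Qed.
Lemma ind_in E w : E w -> indicator E w = 1.
Proof. intros H; unfold indicator; destruct (excluded_middle_informative (E w)); [reflexivity|contradiction]. Qed.
Lemma ind_out E w : ~ E w -> indicator E w = 0.
Proof. intros H; unfold indicator; destruct (excluded_middle_informative (E w)); [contradiction|reflexivity]. Qed.
Lemma ind_01 E w : 0 <= indicator E w <= 1.
Proof. unfold indicator; destruct (excluded_middle_informative (E w)); lra. Qed.

Definition scaleL (c : R) l := map (fun p => (c * fst p, snd p)) l.
Lemma eval_app l1 l2 w : simple_eval (l1 ++ l2) w = simple_eval l1 w + simple_eval l2 w.
Proof. rewrite !eval_sumL, sumL_app; reflexivity. Qed.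
Lemma int_app mu l1 l2 : simple_int mu (l1 ++ l2) = simple_int mu l1 + simple_int mu l2.
Proof. rewrite !int_sumL, sumL_app; reflexivity. Qed.
Lemma eval_scale c l w : simple_eval (scaleL c l) w = c * simple_eval l w.
Proof. rewrite !eval_sumL; unfold scaleL; rewrite sumL_map, <- sumL_scal. apply sumL_ext; intros; simpl; lra. Qed.
Lemma int_scale mu c l : simple_int mu (scaleL c l) = c * simple_int mu l.
Proof. rewrite !int_sumL; unfold scaleL; rewrite sumL_map, <- sumL_scal. apply sumL_ext; intros; simpl; lra. Qed.
Lemma simple_in_app A l1 l2 : simple_in A l1 -> simple_in A l2 -> simple_in A (l1 ++ l2).
Proof. unfold simple_in; intros; apply Forall_app; auto. Qed.
Lemma simple_in_scale A c l : simple_in A l -> simple_in A (scaleL c l).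
Proof. unfold simple_in, scaleL; intros H; apply Forall_map; eapply Forall_impl; [|exact H]; simpl; auto. Qed.
Lemma simple_in_In A l p : simple_in A l -> In p l -> A (snd p).
Proof. unfold simple_in; rewrite Forall_forall; auto. Qed.

Section Field.
Variable A : @set Omega -> Prop.
Hypothesis HA : is_field A.
Lemma fT : A setT. Proof. apply HA. Qed.
Lemma fC E : A E -> A (setC E). Proof. apply HA. Qed.
Lemma fI E F : A E -> A F -> A (setI E F). Proof. apply HA. Qed.
Lemma fU E F : A E -> A F -> A (setU E F).
Proof. intros. replace (setU E F) with (setC (setI (setC E) (setC F))).
  apply fC, fI; apply fC; auto.
  apply set_ext; unfold setC, setI, setU; intros w; tauto. Qed.

Variable mu : @set Omega -> R.
Hypothesis Hadd : fin_additive A mu.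
Hypothesis Hnn : forall E, A E -> 0 <= mu E.

Lemma mu_empty G : A G -> (forall w, ~ G w) -> mu G = 0.
Proof. intros HG Hn. pose proof (Hadd G G HG HG (fun w h => Hn w (proj1 h))) as H.
  replace (setU G G) with G in H. lra.
  apply set_ext; unfold setU; tauto. Qed.

Lemma pos_gen : forall l, simple_in A l -> forall G a, A G ->
  (forall w, G w -> a <= simple_eval l w) ->
  a * mu G <= sumL l (fun p => fst p * mu (setI (snd p) G)).
Proof.
  induction l as [|[c E] l IH]; intros Hl G a HG Hw.
  - rewrite sumL_nil. destruct (classic (exists w, G w)) as [[w Gw]|Hn].
    + specialize (Hw w Gw). simpl in Hw. specialize (Hnn G HG). nra.
    + rewrite mu_empty; auto. lra. firstorder.
  - inversion Hl as [|? ? HE Hl']; subst. simpl in HE.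
    set (G1 := setI G E). set (G2 := setI G (setC E)).
    assert (HG1 : A G1) by (apply fI; auto).
    assert (HG2 : A G2) by (apply fI; auto; apply fC; auto).
    assert (H1 := IH Hl' G1 (a - c) HG1).
    assert (H2 := IH Hl' G2 a HG2).
    assert (S1 : forall w, G1 w -> a - c <= simple_eval l w).
    { intros w [Gw Ew]. specialize (Hw w Gw). rewrite eval_sumL, sumL_cons in Hw.
      rewrite ind_in in Hw by auto. simpl in Hw. rewrite eval_sumL. lra. }
    assert (S2 : forall w, G2 w -> a <= simple_eval l w).
    { intros w [Gw Ew]. specialize (Hw w Gw). rewrite eval_sumL, sumL_cons in Hw.
      rewrite ind_out in Hw by auto. simpl in Hw. rewrite eval_sumL. lra. }
    specialize (H1 S1). specialize (H2 S2).
    assert (HmG : mu G = mu G1 + mu G2).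
    { rewrite <- Hadd; auto. f_equal. apply set_ext; unfold G1, G2, setU, setI, setC; intros w; tauto.
      unfold G1, G2, setI, setC; intros w; tauto. }
    assert (Hsplit : sumL l (fun p => fst p * mu (setI (snd p) G)) =
       sumL l (fun p => fst p * mu (setI (snd p) G1)) + sumL l (fun p => fst p * mu (setI (snd p) G2))).
    { rewrite <- sumL_plus. apply sumL_ext. intros [c' E'] Hin. simpl.
      assert (A E') by (apply (simple_in_In A l (c', E')); auto).
      rewrite <- Rmult_plus_distr_l. f_equal. rewrite <- Hadd; try (apply fI; auto).
      f_equal. apply set_ext; unfold G1, G2, setU, setI, setC; intros w; tauto.
      unfold G1, G2, setI, setC; intros w; tauto. }
    rewrite sumL_cons. simpl fst; simpl snd.
    replace (setI E G) with G1 by (apply set_ext; unfold G1, setI; tauto).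
    rewrite Hsplit, HmG. nra.
Qed.
End Field.
End Simple.

Lemma abs_le_elim x d : Rabs x <= d -> -d <= x <= d.
Proof. unfold Rabs; destruct (Rcase_abs x); lra. Qed.
Lemma abs_le_intro x d : -d <= x <= d -> Rabs x <= d.
Proof. unfold Rabs; destruct (Rcase_abs x); lra. Qed.
Lemma eq_of_small x y : (forall e, 0 < e -> Rabs (x - y) <= 2 * e) -> x = y.
Proof. intros H. destruct (Req_dec x y) as [|Hne]; auto.
  assert (0 < Rabs (x - y)) by (apply Rabs_pos_lt; lra).
  specialize (H (Rabs (x - y) / 4) ltac:(lra)). lra. Qed.

Section Integral.
Context {Omega : Type}.
Variable A : @set Omega -> Prop.
Hypothesis HA : is_field A.
Variable mu : @set Omega -> R.
Hypothesis Hmu : pba A mu.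

Lemma pos_int l a : simple_in A l -> (forall w, a <= simple_eval l w) -> a <= simple_int mu l.
Proof. intros Hl Hw. destruct Hmu as [Hadd [Hnn H1]].
  pose proof (pos_gen A HA mu Hadd Hnn l Hl setT a (fT A HA) (fun w _ => Hw w)) as H.
  rewrite H1 in H. rewrite int_sumL.
  replace (sumL l (fun p => fst p * mu (snd p))) with (sumL l (fun p => fst p * mu (setI (snd p) setT))). lra.
  apply sumL_ext; intros; f_equal; f_equal; apply set_ext; unfold setI, setT; tauto. Qed.

Lemma int_close l1 l2 d : simple_in A l1 -> simple_in A l2 ->
  (forall w, Rabs (simple_eval l1 w - simple_eval l2 w) <= d) ->
  Rabs (simple_int mu l1 - simple_int mu l2) <= d.
Proof. intros H1 H2 Hw. apply abs_le_intro. split.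
  - assert (-d <= simple_int mu (l1 ++ scaleL (-1) l2)).
    { apply pos_int. apply simple_in_app; auto; apply simple_in_scale; auto.
      intros w; rewrite eval_app, eval_scale. pose proof (abs_le_elim _ _ (Hw w)). lra. }
    rewrite int_app, int_scale in H. lra.
  - assert (-d <= simple_int mu (l2 ++ scaleL (-1) l1)).
    { apply pos_int. apply simple_in_app; auto; apply simple_in_scale; auto.
      intros w; rewrite eval_app, eval_scale. pose proof (abs_le_elim _ _ (Hw w)). lra. }
    rewrite int_app, int_scale in H. lra. Qed.

Lemma int_char f : B_fun A f -> forall l d, simple_in A l ->
  (forall w, Rabs (f w - simple_eval l w) <= d) ->
  Rabs (simple_int mu l - integral A mu f) <= d.
Proof.
  intros Hf.
  set (S := fun y => exists l d, simple_in A l /\ (forall w, Rabs (f w - simple_eval l w) <= d) /\ y = simple_int mu l - d).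
  assert (Key : forall l d l' d', simple_in A l -> (forall w, Rabs (f w - simple_eval l w) <= d) ->
     simple_in A l' -> (forall w, Rabs (f w - simple_eval l' w) <= d') ->
     simple_int mu l' - d' <= simple_int mu l + d).
  { intros l d l' d' Hl Hd Hl' Hd'.
    assert (Rabs (simple_int mu l' - simple_int mu l) <= d + d').
    { apply int_close; auto. intros w. pose proof (abs_le_elim _ _ (Hd w)). pose proof (abs_le_elim _ _ (Hd' w)).
      apply abs_le_intro; lra. }
    apply abs_le_elim in H; lra. }
  destruct (Hf 1 ltac:(lra)) as [l0 [Hl0 Hd0]].
  assert (Hb : bound S).
  { exists (simple_int mu l0 + 1). intros y [l [d [Hl [Hd ->]]]]. eapply Key; eauto. }
  assert (Hne : exists y, S y) by (exists (simple_int mu l0 - 1); exists l0, 1; auto).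
  destruct (completeness S Hb Hne) as [v [Hub Hlub]].
  assert (Hv : forall l d, simple_in A l -> (forall w, Rabs (f w - simple_eval l w) <= d) ->
     Rabs (simple_int mu l - v) <= d).
  { intros l d Hl Hd. apply abs_le_intro. split.
    - assert (v <= simple_int mu l + d). { apply Hlub. intros y [l' [d' [Hl' [Hd' ->]]]]. eapply Key; eauto. } lra.
    - assert (simple_int mu l - d <= v) by (apply Hub; exists l, d; auto). lra. }
  assert (Hint : is_integral A mu f v).
  { intros e He. exists e; split; auto. }
  assert (Hv' : is_integral A mu f (integral A mu f)).
  { unfold integral. apply epsilon_spec. exists v; auto. }
  assert (Heq : integral A mu f = v).
  { apply eq_of_small. intros e He. destruct (Hv' e He) as [dl [Hdl Hdl']].
    destruct (Hf (Rmin dl e) ltac:(apply Rmin_glb_lt; auto)) as [l [Hl Hd]].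
    assert (H1 : Rabs (simple_int mu l - integral A mu f) <= e).
    { apply Hdl'; auto. intros w; eapply Rle_trans; [apply Hd|apply Rmin_l]. }
    assert (H2 : Rabs (simple_int mu l - v) <= e).
    { eapply Rle_trans; [apply Hv; eauto|apply Rmin_r]. }
    apply abs_le_elim in H1; apply abs_le_elim in H2. apply abs_le_intro; lra. }
  rewrite Heq. exact Hv.
Qed.

Lemma B_simple l : simple_in A l -> B_fun A (simple_eval l).
Proof. intros Hl e He. exists l; split; auto. intros w. rewrite Rminus_diag, Rabs_R0. lra. Qed.

Lemma int_simple l f : simple_in A l -> (forall w, f w = simple_eval l w) -> integral A mu f = simple_int mu l.
Proof. intros Hl Hf.
  assert (f = simple_eval l) by (apply functional_extensionality; auto). subst f.
  pose proof (int_char _ (B_simple l Hl) l 0 Hl) as H.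
  assert (Rabs (simple_int mu l - integral A mu (simple_eval l)) <= 0).
  { apply H. intros; rewrite Rminus_diag, Rabs_R0; lra. }
  apply abs_le_elim in H0. lra. Qed.

Lemma pba_bounds E : A E -> 0 <= mu E <= 1.
Proof. intros HE. destruct Hmu as [Hadd [Hnn H1]].
  assert (HC : A (setC E)) by (apply fC; auto).
  pose proof (Hadd E (setC E) HE HC (fun w h => proj2 h (proj1 h))) as H.
  replace (setU E (setC E)) with (@setT Omega) in H.
  pose proof (Hnn E HE). pose proof (Hnn _ HC). lra.
  apply set_ext; unfold setU, setC, setT; intros w; tauto. Qed.
End Integral.

Definition weight {Omega} (l : list (R * @set Omega)) := sumL l (fun p => Rabs (fst p)).
Lemma weight_nonneg {Omega} (l : list (R * @set Omega)) : 0 <= weight l.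
Proof. apply sumL_nonneg; intros; apply Rabs_pos. Qed.

Lemma int_diff_bound {Omega} (P Q : @set Omega -> R) l e :
  (forall p, In p l -> Rabs (P (snd p) - Q (snd p)) <= e) ->
  Rabs (simple_int P l - simple_int Q l) <= weight l * e.
Proof. intros H. rewrite !int_sumL. unfold weight.
  replace (sumL l (fun p => fst p * P (snd p)) - sumL l (fun p => fst p * Q (snd p)))
    with (sumL l (fun p => fst p * (P (snd p) - Q (snd p)))).
  eapply Rle_trans; [apply sumL_abs|]. rewrite Rmult_comm, <- sumL_scal. apply sumL_le.
  intros p Hp. rewrite Rabs_mult. specialize (H p Hp). pose proof (Rabs_pos (fst p)). nra.
  unfold Rminus. rewrite <- sumL_opp, <- sumL_plus. apply sumL_ext; intros; ring. Qed.

Lemma ultra_exists (X : Type) (B : (X -> Prop) -> Prop) :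
  (exists S, B S) ->
  (forall S1 S2, B S1 -> B S2 -> exists S3, B S3 /\ forall x, S3 x -> S1 x /\ S2 x) ->
  (forall S, B S -> exists x, S x) ->
  exists U : (X -> Prop) -> Prop,
    (forall S, B S -> U S) /\
    (forall S1 S2, U S1 -> U S2 -> U (fun x => S1 x /\ S2 x)) /\
    (forall S1 S2, (forall x, S1 x -> S2 x) -> U S1 -> U S2) /\
    (forall S, U S -> exists x, S x) /\
    (forall S, U S \/ U (fun x => ~ S x)).
Proof.
intros [S0 HS0] Hdir Hne.
set (F := fun S : X -> Prop => exists S', B S' /\ forall x, S' x -> S x).
assert (FF : filter.Filter F).
{ constructor.
  - exists S0; split; auto. intros; exact I.
  - intros P Q [P' [HP1 HP2]] [Q' [HQ1 HQ2]].
    destruct (Hdir _ _ HP1 HQ1) as [S3 [HS3 H3]].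
    exists S3; split; auto. intros x Hx; destruct (H3 x Hx); split; auto.
  - intros P Q HPQ [P' [HP1 HP2]]. exists P'; split; auto. }
assert (PF : filter.ProperFilter F).
{ apply (filter.Build_ProperFilter_ex (F:=F)); [|exact FF].
  intros P [P' [HP1 HP2]]. destruct (Hne _ HP1) as [x Hx]. exists x; auto. }
destruct (filter.ultraFilterLemma PF) as [G [GU sFG]].
exists G. split; [|split; [|split; [|split]]].
- intros S HS. apply sFG. exists S; split; auto.
- intros S1 S2 H1 H2. pose proof (@filter.filterI _ G _ S1 S2 H1 H2). exact H.
- intros S1 S2 H12 H1. exact (@filter.filterS _ G _ S1 S2 H12 H1).
- intros S HS. exact (@filter.filter_ex _ G _ S HS).
- intros S. exact (@filter.in_ultra_setVsetC _ G S GU).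
Qed.

Lemma ultra_limit (X : Type) (U : (X -> Prop) -> Prop)
  (Uand : forall S1 S2, U S1 -> U S2 -> U (fun x => S1 x /\ S2 x))
  (Umono : forall S1 S2, (forall x, S1 x -> S2 x) -> U S1 -> U S2)
  (Une : forall S, U S -> exists x, S x)
  (Uult : forall S, U S \/ U (fun x => ~ S x))
  (UT : U (fun _ => True))
  (g : X -> R) (Hg : forall x, 0 <= g x <= 1) :
  exists L, forall e, 0 < e -> U (fun x => Rabs (g x - L) < e).
Proof.
  set (T := fun y => U (fun x => y <= g x)).
  assert (Hb : bound T).
  { exists 1. intros y Hy. destruct (Rle_dec y 1) as [|Hn]; auto.
    destruct (Une _ Hy) as [x Hx]. specialize (Hg x). lra. }
  assert (Hne : exists y, T y).
  { exists 0. apply (Umono (fun _ => True)); auto. intros x _; apply Hg. }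
  destruct (completeness T Hb Hne) as [L [Hub Hlub]].
  exists L. intros e He.
  assert (H1 : U (fun x => L - e < g x)).
  { destruct (classic (exists y, T y /\ L - e < y)) as [[y [Ty Hy]]|Hn].
    - apply (Umono _ _ (fun x (h : y <= g x) => Rlt_le_trans _ _ _ Hy h) Ty).
    - assert (L <= L - e). { apply Hlub. intros y Ty. destruct (Rle_dec y (L - e)) as [|n]; auto.
        exfalso; apply Hn; exists y; split; auto; lra. } lra. }
  assert (H2 : U (fun x => g x < L + e)).
  { destruct (Uult (fun x => L + e <= g x)) as [H|H].
    - specialize (Hub _ H). lra.
    - apply (Umono _ _ (fun x h => Rnot_le_lt _ _ h) H). }
  eapply Umono; [|apply (Uand _ _ H1 H2)]. intros x [h1 h2]. apply Rabs_def1; lra.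
Qed.

Section TS.
Variables (N Omega : Type) (A : @set Omega -> Prop) (M : N -> @set Omega -> Prop)
  (t : N -> Omega -> @set Omega -> R).
Hypothesis HT : type_space A M t.

Lemma HA : is_field A. Proof. apply HT. Qed.
Lemma Ht : forall i w, pba A (t i w). Proof. apply HT. Qed.

Lemma conv_eq i Q : conv_types t i Q -> exists cl : list (R * Omega),
  (forall p, In p cl -> 0 <= fst p) /\ sumL cl fst = 1 /\
  forall E, Q E = sumL cl (fun p => fst p * t i (snd p) E).
Proof. intros [cl [H1 [H2 H3]]]. exists cl; split; [|split]; auto.
  rewrite Forall_forall in H1; auto. Qed.

Lemma conv_pba i Q : conv_types t i Q -> pba A Q.
Proof. intros HQ. destruct (conv_eq i Q HQ) as [cl [H1 [H2 H3]]].
  split; [|split].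
  - intros E F HE HF Hd. rewrite !H3, <- sumL_plus. apply sumL_ext. intros p _.
    destruct (Ht i (snd p)) as [Ha _]. rewrite Ha; auto. ring.
  - intros E HE. rewrite H3. apply sumL_nonneg. intros p Hp. specialize (H1 p Hp).
    destruct (Ht i (snd p)) as [_ [Hn _]]. specialize (Hn E HE). nra.
  - rewrite H3, <- H2. apply sumL_ext. intros p _. destruct (Ht i (snd p)) as [_ [_ H]]. rewrite H; ring.
Qed.

Lemma conv_int i Q (cl : list (R * Omega)) l :
  (forall E, Q E = sumL cl (fun p => fst p * t i (snd p) E)) ->
  simple_int Q l = sumL cl (fun p => fst p * simple_int (t i (snd p)) l).
Proof. intros H3. rewrite int_sumL.
  rewrite (sumL_ext _ _ (fun c => sumL cl (fun p => fst c * (fst p * t i (snd p) (snd c))))).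
  rewrite sumL_swap. apply sumL_ext. intros p _. rewrite int_sumL, <- sumL_scal. apply sumL_ext; intros; ring.
  intros c _. rewrite H3, <- sumL_scal. reflexivity. Qed.

Lemma conv_point i w : conv_types t i (t i w).
Proof. exists [(1, w)]. split; [constructor; simpl; [lra|constructor]|split]; simpl; [lra|]. intros; ring. Qed.

Lemma conv_comb i Q1 Q2 s : 0 <= s <= 1 -> conv_types t i Q1 -> conv_types t i Q2 ->
  conv_types t i (fun E => s * Q1 E + (1 - s) * Q2 E).
Proof. intros Hs H1 H2. destruct (conv_eq i Q1 H1) as [c1 [a1 [b1 d1]]].
  destruct (conv_eq i Q2 H2) as [c2 [a2 [b2 d2]]].
  set (sc := fun (r : R) (cl : list (R * Omega)) => map (fun p => (r * fst p, snd p)) cl).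
  exists (sc s c1 ++ sc (1 - s) c2). split; [|split].
  - rewrite Forall_forall. intros p Hp. apply in_app_or in Hp. unfold sc in Hp.
    destruct Hp as [Hp|Hp]; apply in_map_iff in Hp; destruct Hp as [q [<- Hq]]; simpl.
    + specialize (a1 q Hq); nra.
    + specialize (a2 q Hq); nra.
  - change (sumL (sc s c1 ++ sc (1 - s) c2) fst = 1). rewrite sumL_app. unfold sc. rewrite !sumL_map. simpl.
    rewrite !sumL_scal, b1, b2. ring.
  - intros E. change (s * Q1 E + (1 - s) * Q2 E = sumL (sc s c1 ++ sc (1 - s) c2) (fun p => fst p * t i (snd p) E)).
    rewrite sumL_app. unfold sc. rewrite !sumL_map. simpl. rewrite d1, d2, <- !sumL_scal.
    f_equal; apply sumL_ext; intros; ring.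
Qed.

Definition closeF (P Q : @set Omega -> R) (F : list (@set Omega)) (e : R) :=
  forall E, In E F -> Rabs (P E - Q E) < e.

Definition NA (I : list N) := forall F, Forall A F -> forall e, 0 < e ->
  exists P, pba A P /\ forall i, In i I -> exists Q, conv_types t i Q /\ closeF P Q F e.

Definition InClos (i : N) (P : @set Omega -> R) := forall F, Forall A F -> forall e, 0 < e ->
  exists Q, conv_types t i Q /\ closeF P Q F e.



Lemma closure (J : N -> Prop) :
  (forall I, (forall i, In i I -> J i) -> NA I) ->
  exists P, pba A P /\ forall i, J i -> InClos i P.
Proof.
  intros HNA. pose proof HA as HAf.
  set (X := (list N * list (@set Omega) * R)%type).
  set (valid := fun x : X => (forall i, In i (fst (fst x)) -> J i) /\ Forall A (snd (fst x)) /\ 0 < snd x).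
  set (good := fun (x : X) P => pba A P /\ (valid x -> forall i, In i (fst (fst x)) ->
      exists Q, conv_types t i Q /\ closeF P Q (snd (fst x)) (snd x))).
  assert (Hgood : forall x, exists P, good x P).
  { intros [[I F] e]. destruct (classic (valid ((I,F),e))) as [Hv|Hv].
    - destruct Hv as [H1 [H2 H3]]. destruct (HNA I H1 F H2 e H3) as [P [HP HQ]]. exists P; split; auto.
    - destruct (HNA [] (fun i h => match h with end) [] (Forall_nil _) 1 Rlt_0_1) as [P [HP _]].
      exists P; split; auto. intros; contradiction. }
  set (Px := fun x => epsilon (inhabits (fun _ : @set Omega => 0)) (good x)).
  assert (HPx : forall x, good x (Px x)) by (intros x; apply epsilon_spec, Hgood).
  set (tail := fun (x0 x : X) => valid x /\ incl (fst (fst x0)) (fst (fst x)) /\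
     incl (snd (fst x0)) (snd (fst x)) /\ snd x <= snd x0).
  set (B := fun S => exists x0, valid x0 /\ S = tail x0).
  assert (V0 : valid (([], []), 1)).
  { split; [intros i []|split; [constructor|simpl; lra]]. }
  destruct (ultra_exists X B) as [U [UB [Uand [Umono [Une Uult]]]]].
  - exists (tail (([], []), 1)). exists (([],[]),1). split; auto.
  - intros S1 S2 [x1 [V1 ->]] [x2 [V2 ->]].
    destruct x1 as [[I1 F1] e1]; destruct x2 as [[I2 F2] e2].
    destruct V1 as [a1 [b1 c1]]; destruct V2 as [a2 [b2 c2]]. simpl in *.
    exists (tail ((I1 ++ I2, F1 ++ F2), Rmin e1 e2)). split.
    + exists ((I1 ++ I2, F1 ++ F2), Rmin e1 e2). split; auto.
      split; [|split]; simpl.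
      * intros i Hi; apply in_app_or in Hi; destruct Hi; auto.
      * apply Forall_app; auto.
      * apply Rmin_glb_lt; auto.
    + intros x [Vx [h1 [h2 h3]]]. simpl in *.
      assert (snd x <= e1) by (eapply Rle_trans; [exact h3|apply Rmin_l]).
      assert (snd x <= e2) by (eapply Rle_trans; [exact h3|apply Rmin_r]).
      split; (split; [exact Vx|split; [|split; [|auto]]]); intros a Ha;
        (apply h1 || apply h2); apply in_or_app; auto.
  - intros S [x0 [V ->]]. exists x0. split; auto; split; [apply incl_refl|split; [apply incl_refl|lra]].
  - assert (UT : U (fun _ => True)).
    { apply (Umono (tail (([], []), 1))); auto. apply UB. exists (([],[]),1); auto. }
    set (Ps := fun E => if excluded_middle_informative (A E) then
        epsilon (inhabits 0) (fun L => forall e, 0 < e -> U (fun x => Rabs (Px x E - L) < e)) else 0).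
    assert (Plim : forall E, A E -> forall e, 0 < e -> U (fun x => Rabs (Px x E - Ps E) < e)).
    { intros E HE. unfold Ps. destruct (excluded_middle_informative (A E)) as [_|n]; [|contradiction].
      apply epsilon_spec. apply ultra_limit; auto. intros x. apply (pba_bounds A HAf). apply (HPx x). auto. }
    assert (Hex : forall S1 S2 S3, U S1 -> U S2 -> U S3 -> exists x, S1 x /\ S2 x /\ S3 x).
    { intros S1 S2 S3 H1 H2 H3. destruct (Une _ (Uand _ _ H1 (Uand _ _ H2 H3))) as [x [? [? ?]]]. exists x; auto. }
    assert (HPs : pba A Ps).
    { split; [|split].
      - intros E F HE HF Hd. assert (HU : A (setU E F)) by (apply fU; auto).
        apply eq_of_small. intros e He.
        destruct (Hex _ _ _ (Plim _ HE (e/2) ltac:(lra)) (Plim _ HF (e/2) ltac:(lra)) (Plim _ HU (e/2) ltac:(lra)))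
          as [x [h1 [h2 h3]]].
        destruct (HPx x) as [[Hadd _] _]. rewrite (Hadd E F HE HF Hd) in h3.
        apply Rabs_def2 in h1; apply Rabs_def2 in h2; apply Rabs_def2 in h3. apply abs_le_intro; lra.
      - intros E HE. destruct (Rle_dec 0 (Ps E)) as [|n]; auto. exfalso.
        destruct (Une _ (Plim E HE (- Ps E) ltac:(lra))) as [x h].
        destruct (HPx x) as [[_ [Hn _]] _]. specialize (Hn E HE). apply Rabs_def2 in h. lra.
      - apply eq_of_small. intros e He. pose proof (fT A HAf) as HT'.
        destruct (Une _ (Plim _ HT' e He)) as [x h].
        destruct (HPx x) as [[_ [_ H1]] _]. rewrite H1 in h. apply Rabs_def2 in h. apply abs_le_intro; lra. }
    exists Ps. split; auto.
    intros i Ji F HF e He.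
    assert (UF : forall F, Forall A F -> U (fun x => forall E, In E F -> Rabs (Px x E - Ps E) < e / 2)).
    { induction F0 as [|E F0 IH]; intros HF0.
      - apply (Umono (fun _ => True)); auto. intros x _ E [].
      - inversion HF0; subst. eapply Umono; [|apply (Uand _ _ (Plim E H1 (e/2) ltac:(lra)) (IH H2))].
        intros x [h1 h2] E' [<-|Hin]; auto. }
    assert (Ut : U (tail (([i], F), e / 2))).
    { apply UB. exists (([i], F), e/2). split; auto. split; [|split]; simpl; auto.
      intros i' [<-|[]]; auto. lra. }
    destruct (Une _ (Uand _ _ (UF F HF) Ut)) as [x [h1 [Vx [hi [hF he]]]]].
    destruct (HPx x) as [_ Hg]. destruct (Hg Vx i (hi i (or_introl eq_refl))) as [Q [HQ HcQ]].
    exists Q. split; auto. intros E HE. specialize (h1 E HE). specialize (HcQ E (hF E HE)).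
    simpl in he. apply Rabs_def2 in h1. apply Rabs_def2 in HcQ. apply Rabs_def1; lra.
Qed.



Lemma closeF_app P Q F1 F2 e : closeF P Q (F1 ++ F2) e -> closeF P Q F1 e /\ closeF P Q F2 e.
Proof. unfold closeF; intros H; split; intros E HE; apply H, in_or_app; auto. Qed.
Lemma closeF_mono P Q F e e' : e <= e' -> closeF P Q F e -> closeF P Q F e'.
Proof. unfold closeF; intros ? H E HE; specialize (H E HE); lra. Qed.

Lemma simple_in_sets (l : list (R * @set Omega)) : simple_in A l -> Forall A (map snd l).
Proof. unfold simple_in; intros H; apply Forall_map; auto. Qed.

Lemma approx_close P (HP : pba A P) : forall fs, Forall (B_fun A) fs -> forall eps, 0 < eps ->
  exists F, Forall A F /\ exists eta, 0 < eta /\ forall Q, pba A Q -> closeF P Q F eta ->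
  Forall (fun f => Rabs (integral A P f - integral A Q f) < eps) fs.
Proof.
  pose proof HA as HAf.
  induction fs as [|f fs IH]; intros Hfs eps He.
  - exists []; split; [constructor|]. exists 1; split; [lra|]. intros; constructor.
  - inversion Hfs as [|? ? Hf Hfs']; subst.
    destruct (Hf (eps/4) ltac:(lra)) as [l [Hl Hd]].
    destruct (IH Hfs' eps He) as [F2 [HF2 [eta2 [He2 H2]]]].
    pose proof (weight_nonneg l) as Hw.
    set (eta1 := (eps/4) / (weight l + 1)).
    assert (He1 : 0 < eta1) by (unfold eta1; apply Rdiv_lt_0_compat; lra).
    exists (map snd l ++ F2). split; [apply Forall_app; split; auto; apply simple_in_sets; auto|].
    exists (Rmin eta1 eta2). split; [apply Rmin_glb_lt; auto|].
    intros Q HQ Hc. apply closeF_app in Hc as [Hc1 Hc2]. constructor.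
    + pose proof (int_char A HAf P HP f Hf l (eps/4) Hl Hd) as h1.
      pose proof (int_char A HAf Q HQ f Hf l (eps/4) Hl Hd) as h2.
      assert (h3 : Rabs (simple_int P l - simple_int Q l) <= weight l * eta1).
      { apply int_diff_bound. intros p Hp. apply Rlt_le. eapply Rlt_le_trans; [apply Hc1; apply in_map; auto|apply Rmin_l]. }
      assert (weight l * eta1 <= eps / 4).
      { unfold eta1. apply (Rmult_le_reg_r (weight l + 1)); [lra|]. field_simplify; [|lra]. nra. }
      apply abs_le_elim in h1; apply abs_le_elim in h2; apply abs_le_elim in h3. apply Rabs_def1; lra.
    + apply H2; auto. eapply closeF_mono; [apply Rmin_r|exact Hc2].
Qed.

Lemma clos_Pi i P : pba A P -> InClos i P -> Pi A t i P.
Proof. intros HP Hc. split.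
  - split; [apply HP|]. exists 1. intros E HE. pose proof (pba_bounds A HA P HP E HE). apply abs_le_intro; lra.
  - intros fs Hfs eps He. destruct (approx_close P HP fs Hfs eps He) as [F [HF [eta [Heta H]]]].
    destruct (Hc F HF eta Heta) as [Q [HQ HcQ]]. exists Q; split; auto. apply H; auto. eapply conv_pba; eauto.
Qed.

Definition sumf (f : N -> Omega -> R) (I : list N) (w : Omega) := fold_right (fun i acc => f i w + acc) 0 I.

Lemma approx_sum P (HP : pba A P) (f : N -> Omega -> R) :
  forall I, (forall i, In i I -> InClos i P /\ B_fun A (f i) /\ forall w, 0 <= integral A (t i w) (f i)) ->
  forall d, 0 < d -> exists l, simple_in A l /\
   (forall w, Rabs (sumf f I w - simple_eval l w) <= INR (length I) * d) /\
   - 2 * INR (length I) * d <= simple_int P l.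
Proof.
  pose proof HA as HAf.
  induction I as [|i I IH]; intros HI d Hd.
  - exists []. split; [constructor|]. simpl. split; [intros; rewrite Rminus_diag, Rabs_R0; lra|]. unfold simple_int; simpl; lra.
  - destruct (HI i (or_introl eq_refl)) as [Hc [Hf Hpos]].
    destruct (IH (fun j h => HI j (or_intror h)) d Hd) as [lr [Hlr [Hdr Hir]]].
    destruct (Hf d Hd) as [li [Hli Hdi]].
    pose proof (weight_nonneg li) as Hw.
    set (eta := d / (weight li + 1)).
    assert (He : 0 < eta) by (unfold eta; apply Rdiv_lt_0_compat; lra).
    destruct (Hc (map snd li) (simple_in_sets li Hli) eta He) as [Q [HQ HcQ]].
    destruct (conv_eq i Q HQ) as [cl [a1 [b1 d1]]].
    assert (HQl : - d <= simple_int Q li).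
    { rewrite (conv_int i Q cl li d1).
      assert (E1 : sumL cl (fun p => fst p * (-d)) = -d).
      { rewrite (sumL_ext _ _ (fun p => -d * fst p)) by (intros; ring). rewrite sumL_scal, b1; ring. }
      rewrite <- E1.
      apply sumL_le. intros p Hp. specialize (a1 p Hp).
      pose proof (int_char A HAf _ (Ht i (snd p)) (f i) Hf li d Hli Hdi) as h.
      specialize (Hpos (snd p)). apply abs_le_elim in h. nra. }
    assert (h3 : Rabs (simple_int P li - simple_int Q li) <= weight li * eta).
    { apply int_diff_bound. intros p Hp. apply Rlt_le. apply HcQ; apply in_map; auto. }
    assert (weight li * eta <= d).
    { unfold eta. apply (Rmult_le_reg_r (weight li + 1)); [lra|]. field_simplify; [|lra]. nra. }
    exists (li ++ lr). split; [apply simple_in_app; auto|]. split.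
    + intros w. rewrite eval_app. cbn [length]. rewrite S_INR. unfold sumf; simpl fold_right. fold (sumf f I w).
      pose proof (abs_le_elim _ _ (Hdi w)). pose proof (abs_le_elim _ _ (Hdr w)). apply abs_le_intro. lra.
    + rewrite int_app. cbn [length]. rewrite S_INR. apply abs_le_elim in h3. lra.
Qed.


Lemma semi_nonneg P (HP : pba A P) (Hc : forall i, InClos i P) I f :
  semi_bet A t I f -> 0 <= integral A P (fun w => fold_right (fun i acc => f i w + acc) 0 I).
Proof.
  pose proof HA as HAf.
  intros [_ [HB Hcc]].
  assert (HI : forall i, In i I -> InClos i P /\ B_fun A (f i) /\ forall w, 0 <= integral A (t i w) (f i)).
  { intros i Hi. split; auto. split; auto. intros w. destruct (Hcc w) as [S [_ [Sw HS]]]. apply (HS w Sw i Hi). }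
  change (0 <= integral A P (sumf f I)).
  set (n := INR (length I)). assert (Hn : 0 <= n) by apply pos_INR.
  assert (Bs : B_fun A (sumf f I)).
  { intros eps He. destruct (approx_sum P HP f I HI (eps / (n + 1)) ltac:(apply Rdiv_lt_0_compat; lra)) as [l [Hl [Hd _]]].
    exists l; split; auto. intros w. eapply Rle_trans; [apply Hd|]. fold n.
    apply (Rmult_le_reg_r (n+1)); [lra|].
    replace (n * (eps / (n + 1)) * (n + 1)) with (n * eps) by (field; lra). nra. }
  destruct (Rle_dec 0 (integral A P (sumf f I))) as [|Hneg]; auto. exfalso.
  set (v := integral A P (sumf f I)) in *.
  set (d := - v / (3 * n + 1)).
  assert (Hd : 0 < d) by (unfold d; apply Rdiv_lt_0_compat; lra).
  assert (Hd3 : d * (3 * n + 1) = - v) by (unfold d; field; lra).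
  destruct (approx_sum P HP f I HI d Hd) as [l [Hl [Hdl Hil]]]. fold n in Hdl, Hil.
  pose proof (int_char A HAf P HP _ Bs l (n * d) Hl Hdl) as h. apply abs_le_elim in h.
  fold v in h. nra.
Qed.

Lemma B_ind E : A E -> B_fun A (indicator E).
Proof. intros HE. replace (indicator E) with (simple_eval [(1, E)]).
  apply B_simple. constructor; auto. apply functional_extensionality; intros w. unfold simple_eval; simpl; ring. Qed.

Lemma int_ind Q E : pba A Q -> A E -> integral A Q (indicator E) = Q E.
Proof. intros HQ HE. rewrite (int_simple A HA Q HQ [(1, E)]). unfold simple_int; simpl; ring.
  constructor; auto. intros w; unfold simple_eval; simpl; ring. Qed.

Lemma cons_omega : consistent A t -> exists w : Omega, True.
Proof. intros Hc. destruct HT as [[i] _]. destruct (Hc [i]) as [P HP].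
  destruct (HP i (or_introl eq_refl)) as [_ H]. destruct (H [] (Forall_nil _) 1 Rlt_0_1) as [Q [HQ _]].
  destruct HQ as [[|p cl] [_ [Hs _]]]. simpl in Hs; lra. exists (snd p); auto. Qed.

Lemma cons_NA : consistent A t -> forall I, NA I.
Proof.
  intros Hc I F HF e He. destruct (cons_omega Hc) as [w0 _]. destruct HT as [[j] _].
  destruct I as [|i0 I'].
  - exists (t j w0). split; [apply Ht|intros i []].
  - destruct (Hc (i0 :: I')) as [P HP].
    assert (HBs : Forall (B_fun A) (map indicator F)).
    { apply Forall_map. eapply Forall_impl; [|exact HF]. apply B_ind. }
    assert (Hap : forall i, In i (i0 :: I') -> exists Q, conv_types t i Q /\
       forall E, In E F -> Rabs (integral A P (indicator E) - Q E) < e / 2).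
    { intros i Hi. destruct (HP i Hi) as [_ H]. destruct (H _ HBs (e/2) ltac:(lra)) as [Q [HQ HQ2]].
      exists Q; split; auto. intros E HE. rewrite Forall_forall in HQ2.
      specialize (HQ2 (indicator E) (in_map _ _ _ HE)). rewrite (int_ind Q E) in HQ2; auto.
      eapply conv_pba; eauto. rewrite Forall_forall in HF; auto. }
    destruct (Hap i0 (or_introl eq_refl)) as [Q0 [HQ0 H0]].
    exists Q0. split; [eapply conv_pba; eauto|]. intros i Hi.
    destruct (Hap i Hi) as [Q [HQ H1]]. exists Q; split; auto. intros E HE.
    specialize (H0 E HE); specialize (H1 E HE). apply Rabs_def2 in H0; apply Rabs_def2 in H1.
    apply Rabs_def1; lra.
Qed.

Lemma not_both : consistent A t -> money_pump A t -> False.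
Proof.
  intros Hc Hmp. destruct (closure (fun _ => True)) as [P [HP HcP]].
  { intros I _. apply cons_NA; auto. }
  destruct (Hmp P HP) as [I [f [Hs Hneg]]].
  pose proof (semi_nonneg P HP (fun i => HcP i Logic.I) I f Hs). lra.
Qed.

Lemma sumf_sumL (f : N -> Omega -> R) I w : sumf f I w = sumL I (fun i => f i w).
Proof. reflexivity. Qed.

Lemma inf_exists (g : Omega -> R) (w0 : Omega) K : (forall w, -K <= g w) ->
  exists a, (forall w, a <= g w) /\ forall eta, 0 < eta -> exists w, g w < a + eta.
Proof.
  intros Hb. set (S := fun y => exists w, y = - g w).
  assert (HS : bound S) by (exists K; intros y [w ->]; specialize (Hb w); lra).
  destruct (completeness S HS (ex_intro _ (- g w0) (ex_intro _ w0 eq_refl))) as [m [Hub Hlub]].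
  exists (-m). split.
  - intros w. specialize (Hub (- g w) (ex_intro _ w eq_refl)). lra.
  - intros eta He. apply NNPP; intros Hn.
    assert (m <= m - eta).
    { apply Hlub. intros y [w ->]. apply Rnot_lt_le. intros Hlt. apply Hn. exists w. lra. }
    lra.
Qed.

Lemma int_abs_weight (Q : @set Omega -> R) l : pba A Q -> simple_in A l -> Rabs (simple_int Q l) <= weight l.
Proof. intros HQ Hl. replace (simple_int Q l) with (simple_int Q l - simple_int (fun _ => 0) l).
  rewrite <- (Rmult_1_r (weight l)). apply int_diff_bound. intros p Hp. rewrite Rminus_0_r.
  pose proof (pba_bounds A HA Q HQ (snd p) (simple_in_In A l p Hl Hp)). apply abs_le_intro; lra.
  rewrite (int_sumL (fun _ => 0)). rewrite (sumL_ext _ _ (fun _ => 0)) by (intros; ring). rewrite sumL_const; ring. Qed.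

Lemma sum2_lin {X Y} (l1 : list X) (l2 : list Y) (x y z : X -> Y -> R) a b c :
  sumL l1 (fun i => sumL l2 (fun E => a * x i E + b * y i E + c * z i E)) =
  a * sumL l1 (fun i => sumL l2 (x i)) + b * sumL l1 (fun i => sumL l2 (y i)) + c * sumL l1 (fun i => sumL l2 (z i)).
Proof. rewrite <- !sumL_scal, <- !sumL_plus. apply sumL_ext; intros i _.
  rewrite <- !sumL_scal, <- !sumL_plus. reflexivity. Qed.


Lemma separation (w0 : Omega) (i0 : N) (I' : list N) (HnD : NoDup (i0 :: I'))
  (F : list (@set Omega)) (HF : Forall A F) (e : R) (He : 0 < e)
  (Hfar : forall P, pba A P -> exists i, In i (i0 :: I') /\ forall Q, conv_types t i Q ->
      exists E, In E F /\ e <= Rabs (P E - Q E)) :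
  exists f : N -> Omega -> R, semi_bet A t (i0 :: I') f /\
     exists c, c < 0 /\ forall w, sumf f (i0 :: I') w = c.
Proof.
  pose proof HA as HAf.
  assert (Hi0 : ~ In i0 I') by (inversion HnD; auto).
  set (I1 := i0 :: I').
  set (Tup := fun T : N -> @set Omega -> R => forall i, In i I1 -> conv_types t i (T i)).
  set (dd := fun (T : N -> @set Omega -> R) i E => T i E - T i0 E).
  set (phi := fun T => sumL I' (fun i => sumL F (fun E => dd T i E * dd T i E))).
  set (ip := fun T1 T => sumL I' (fun i => sumL F (fun E => dd T1 i E * dd T i E))).
  assert (HFin : forall E, In E F -> A E) by (rewrite <- Forall_forall; auto).
  assert (Tb : forall T i E, Tup T -> In i I1 -> In E F -> 0 <= T i E <= 1).
  { intros T i E HT' Hi HE. apply (pba_bounds A HAf). eapply conv_pba; eauto. auto. }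
  assert (phi_ge : forall T, Tup T -> e * e <= phi T).
  { intros T HT'. destruct (Hfar (T i0)) as [i [Hi HQ]].
    - eapply conv_pba. apply HT'. left; auto.
    - destruct (HQ (T i) (HT' i Hi)) as [E [HE Hle]].
      destruct (classic (i = i0)) as [->|Hne].
      + rewrite Rminus_diag, Rabs_R0 in Hle. lra.
      + assert (HiI : In i I') by (destruct Hi; [congruence|auto]).
        assert (Hsq : e * e <= dd T i E * dd T i E).
        { unfold dd. rewrite Rabs_minus_sym in Hle. revert Hle. unfold Rabs; destruct (Rcase_abs _); intros; nra. }
        eapply Rle_trans; [exact Hsq|]. unfold phi.
        eapply Rle_trans; [|apply (sumL_term I' (fun i => sumL F (fun E => dd T i E * dd T i E)) i); auto].
        * apply (sumL_term F (fun E => dd T i E * dd T i E) E); auto. intros; nra.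
        * intros; apply sumL_nonneg; intros; nra. }
  assert (Tup0 : Tup (fun i => t i w0)) by (intros i _; apply conv_point).
  set (Sx := fun y => exists T, Tup T /\ y = - phi T).
  assert (HSb : bound Sx).
  { exists 0. intros y [T [HT' ->]]. specialize (phi_ge T HT'). nra. }
  destruct (completeness Sx HSb (ex_intro _ _ (ex_intro _ _ (conj Tup0 eq_refl)))) as [m [Hub Hlub]].
  assert (Halpha : forall T, Tup T -> - m <= phi T).
  { intros T HT'. specialize (Hub (- phi T) (ex_intro _ T (conj HT' eq_refl))). lra. }
  assert (Happrox : forall eta, 0 < eta -> exists T, Tup T /\ phi T < - m + eta).
  { intros eta Heta. apply NNPP; intros Hn.
    assert (m <= m - eta).
    { apply Hlub. intros y [T [HT' ->]]. apply Rnot_lt_le. intros Hlt. apply Hn. exists T. split; auto. lra. }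
    lra. }
  set (MM := 4 * (INR (length I') * INR (length F)) + 1 + e * e).
  assert (HM0 : 0 <= INR (length I') * INR (length F)) by (apply Rmult_le_pos; apply pos_INR).
  assert (HM : 0 < MM) by (unfold MM; nra).
  assert (Dbound : forall T T1, Tup T -> Tup T1 ->
     sumL I' (fun i => sumL F (fun E => (dd T i E - dd T1 i E) * (dd T i E - dd T1 i E))) <= MM).
  { intros T T1 HT' HT1.
    assert (sumL I' (fun i => sumL F (fun E => (dd T i E - dd T1 i E) * (dd T i E - dd T1 i E)))
       <= sumL I' (fun i => sumL F (fun E => 4))).
    { apply sumL_le; intros i Hi; apply sumL_le; intros E HE. unfold dd.
      assert (In i I1) by (right; auto). assert (In i0 I1) by (left; auto).
      pose proof (Tb T i E HT' H HE). pose proof (Tb T i0 E HT' H0 HE).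
      pose proof (Tb T1 i E HT1 H HE). pose proof (Tb T1 i0 E HT1 H0 HE). nra. }
    eapply Rle_trans; [exact H|]. rewrite (sumL_ext I' _ (fun _ => INR (length F) * 4)) by (intros; apply sumL_const).
    rewrite sumL_const. unfold MM. nra. }
  set (s := e * e / (2 * MM)).
  assert (Hs : 0 < s) by (unfold s; apply Rdiv_lt_0_compat; nra).
  assert (Hs1 : s <= 1).
  { assert (e * e <= 2 * MM) by (unfold MM; nra).
    unfold s. apply Rmult_le_reg_r with (2 * MM); [lra|]. unfold Rdiv. rewrite Rmult_assoc, Rinv_l; lra. }
  set (eta := s * s * MM).
  assert (Heta : 0 < eta) by (unfold eta; apply Rmult_lt_0_compat; nra).
  assert (HsM : s * MM = e * e / 2) by (unfold s; field; lra).
  destruct (Happrox eta Heta) as [T1 [HT1 Hphi1]].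
  assert (Key : forall T, Tup T -> e * e / 2 <= ip T1 T).
  { intros T HT'.
    set (T' := fun i E => s * T i E + (1 - s) * T1 i E).
    assert (HT'' : Tup T') by (intros i Hi; apply conv_comb; [lra|apply HT'|apply HT1]; auto).
    pose proof (Halpha T' HT'') as Ha.
    assert (Hexp : phi T' = (1 - 2 * s) * phi T1 + 2 * s * ip T1 T + s * s *
        sumL I' (fun i => sumL F (fun E => (dd T i E - dd T1 i E) * (dd T i E - dd T1 i E)))).
    { unfold phi, ip. rewrite <- sum2_lin. apply sumL_ext; intros i _; apply sumL_ext; intros E _. unfold dd, T'. ring. }
    pose proof (Dbound T T1 HT' HT1) as HD.
    revert Hexp HD. generalize (sumL I' (fun i => sumL F (fun E => (dd T i E - dd T1 i E) * (dd T i E - dd T1 i E)))).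
    intros D Hexp HD.
    assert (HssD : s * s * D <= eta) by (unfold eta; apply Rmult_le_compat_l; nra).
    assert (Heta2 : eta = s * (e * e / 2)) by (unfold eta; rewrite <- HsM; ring).
    assert (X : 0 < s * (2 * (ip T1 T - phi T1) + e * e)) by nra.
    assert (0 < 2 * (ip T1 T - phi T1) + e * e).
    { apply Rmult_lt_reg_l with s; [auto|rewrite Rmult_0_r; exact X]. }
    pose proof (phi_ge T1 HT1). lra. }
  set (hl := fun i => map (fun E => (dd T1 i E, E)) F).
  set (h0 := flat_map (fun i => scaleL (-1) (hl i)) I').
  set (hh := fun i => if excluded_middle_informative (i = i0) then h0 else hl i).
  assert (hl_in : forall i, simple_in A (hl i)).
  { intros i. unfold simple_in, hl. apply Forall_map. eapply Forall_impl; [|exact HF]. simpl; auto. }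
  assert (h0_in : simple_in A h0).
  { unfold simple_in. rewrite Forall_forall. intros p Hp. unfold h0 in Hp. apply in_flat_map in Hp as [i [_ Hp]].
    apply (simple_in_In A (scaleL (-1) (hl i))); auto. apply simple_in_scale; auto. }
  assert (hh_in : forall i, simple_in A (hh i)).
  { intros i. unfold hh. destruct (excluded_middle_informative (i = i0)); auto. }
  assert (hh_i0 : hh i0 = h0).
  { unfold hh. destruct (excluded_middle_informative (i0 = i0)); [reflexivity|congruence]. }
  assert (hh_I' : forall i, In i I' -> hh i = hl i).
  { intros i Hi. unfold hh. destruct (excluded_middle_informative (i = i0)); [subst; contradiction|reflexivity]. }
  assert (int_hl : forall Q i, simple_int Q (hl i) = sumL F (fun E => dd T1 i E * Q E)).
  { intros Q i. unfold hl. rewrite int_sumL, sumL_map. reflexivity. }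
  assert (int_h0 : forall Q, simple_int Q h0 = - sumL I' (fun i => simple_int Q (hl i))).
  { intros Q. unfold h0. rewrite int_sumL, sumL_flat_map, <- sumL_opp. apply sumL_ext; intros i _.
    rewrite <- int_sumL, int_scale. ring. }
  assert (eval_hl : forall w i, simple_eval (hl i) w = sumL F (fun E => dd T1 i E * indicator E w)).
  { intros w i. unfold hl. rewrite eval_sumL, sumL_map. reflexivity. }
  assert (eval_h0 : forall w, simple_eval h0 w = - sumL I' (fun i => simple_eval (hl i) w)).
  { intros w. unfold h0. rewrite eval_sumL, sumL_flat_map, <- sumL_opp. apply sumL_ext; intros i _.
    rewrite <- eval_sumL, eval_scale. ring. }
  assert (ip_int : forall T, ip T1 T = sumL I1 (fun i => simple_int (T i) (hh i))).
  { intros T. unfold I1. rewrite sumL_cons, hh_i0, int_h0.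
    rewrite (sumL_ext I' (fun i => simple_int (T i) (hh i)) (fun i => simple_int (T i) (hl i)))
      by (intros; rewrite hh_I'; auto).
    unfold ip. rewrite <- sumL_opp, <- sumL_plus. apply sumL_ext; intros i _. rewrite !int_hl.
    rewrite <- sumL_opp, <- sumL_plus. apply sumL_ext; intros E _. unfold dd; ring. }
  assert (eval_sum : forall w, sumL I1 (fun i => simple_eval (hh i) w) = 0).
  { intros w. unfold I1. rewrite sumL_cons, hh_i0, eval_h0.
    rewrite (sumL_ext I' (fun i => simple_eval (hh i) w) (fun i => simple_eval (hl i) w))
      by (intros; rewrite hh_I'; auto). ring. }
  set (g := fun i w => simple_int (t i w) (hh i)).
  assert (ainf : forall i, exists a, (forall w, a <= g i w) /\ forall eta, 0 < eta -> exists w, g i w < a + eta).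
  { intros i. apply (inf_exists (g i) w0 (weight (hh i))). intros w.
    pose proof (int_abs_weight (t i w) (hh i) (Ht i w) (hh_in i)). apply abs_le_elim in H. unfold g. lra. }
  set (a := fun i => epsilon (inhabits 0) (fun a => (forall w, a <= g i w) /\ forall eta, 0 < eta -> exists w, g i w < a + eta)).
  assert (Ha : forall i, (forall w, a i <= g i w) /\ forall eta, 0 < eta -> exists w, g i w < a i + eta).
  { intros i. unfold a. apply epsilon_spec. apply ainf. }
  assert (Hsum : e * e / 2 <= sumL I1 a).
  { apply Rnot_lt_le; intros Hlt.
    set (n1 := INR (length I1)).
    assert (Hn1 : 0 < n1) by (unfold n1, I1; cbn [length]; rewrite S_INR; pose proof (pos_INR (length I')); lra).
    set (del := (e * e / 2 - sumL I1 a) / (2 * n1)).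
    assert (Hdel : 0 < del) by (unfold del; apply Rdiv_lt_0_compat; lra).
    set (ws := fun i => epsilon (inhabits w0) (fun w => g i w < a i + del)).
    assert (Hws : forall i, g i (ws i) < a i + del) by (intros i; unfold ws; apply epsilon_spec; apply (proj2 (Ha i)); auto).
    set (Ts := fun i => t i (ws i)).
    assert (HTs : Tup Ts) by (intros i _; apply conv_point).
    pose proof (Key Ts HTs) as HK. rewrite ip_int in HK.
    assert (H1 : sumL I1 (fun i => simple_int (Ts i) (hh i)) <= sumL I1 (fun i => a i + del))
      by (apply sumL_le; intros; apply Rlt_le; apply Hws).
    rewrite sumL_plus, sumL_const in H1. fold n1 in H1.
    assert (n1 * del = (e * e / 2 - sumL I1 a) / 2) by (unfold del; field; lra).
    lra. }
  set (f := fun i w => simple_eval (hh i) w - a i).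
  assert (Hf_eq : forall i, f i = simple_eval (hh i ++ [(- a i, setT)])).
  { intros i. apply functional_extensionality; intros w. unfold f. rewrite eval_app.
    rewrite (eval_sumL [(- a i, setT)] w), sumL_cons, sumL_nil. cbn [fst snd].
    rewrite ind_in by exact Logic.I. ring. }
  assert (Hf_in : forall i, simple_in A (hh i ++ [(- a i, setT)])).
  { intros i. apply simple_in_app; auto. constructor; [apply fT; auto|constructor]. }
  exists f. split.
  - split; [exact HnD|split].
    + intros i _. rewrite Hf_eq. apply B_simple; auto.
    + intros w. exists setT. split; [split|split].
      * exists w; exact Logic.I.
      * exists setT. split; [apply fT; auto|split; [intros; exact Logic.I|]].
        intros w' _ i _. apply (Ht i w').
      * exact Logic.I.
      * intros w' _ i Hi. rewrite Hf_eq.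
        rewrite (int_simple A HAf (t i w') (Ht i w') _ _ (Hf_in i)) by (intros; reflexivity).
        rewrite int_app, (int_sumL _ [(- a i, setT)]), sumL_cons, sumL_nil. cbn [fst snd].
        destruct (Ht i w') as [_ [_ H1]]. rewrite H1.
        pose proof (proj1 (Ha i) w'). unfold g in H. lra.
  - exists (- sumL I1 a). split; [assert (0 < e * e) by nra; lra|]. intros w. rewrite sumf_sumL. unfold f.
    unfold Rminus. rewrite sumL_plus, sumL_opp. fold I1. rewrite eval_sum. ring.
Qed.

Lemma nodup_exists (I0 : list N) : exists I1, NoDup I1 /\ forall i, In i I1 <-> In i I0.
Proof. induction I0 as [|a I0 IH].
  - exists []; split; [constructor|tauto].
  - destruct IH as [I1 [HnD Hm]]. destruct (classic (In a I1)) as [Ha|Ha].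
    + exists I1; split; auto. intros i; split; intros Hi.
      * right; apply Hm; auto.
      * destruct Hi as [<-|Hi]; auto. apply Hm; auto.
    + exists (a :: I1); split; [constructor; auto|]. intros i; simpl; rewrite Hm; tauto.
Qed.

Lemma at_least : ~ consistent A t -> money_pump A t.
Proof.
  pose proof HA as HAf.
  intros Hnc P0 HP0.
  assert (Hw : exists w : Omega, True).
  { apply NNPP; intros Hn. destruct HP0 as [Hadd [_ H1]].
    pose proof (Hadd setT setT (fT A HAf) (fT A HAf) (fun w _ => Hn (ex_intro _ w Logic.I))) as H.
    replace (setU setT setT) with (@setT Omega) in H by (apply set_ext; unfold setU, setT; tauto). lra. }
  destruct Hw as [w0 _].
  unfold consistent in Hnc. apply not_all_ex_not in Hnc as [I0 HI0].
  destruct (nodup_exists I0) as [I1 [HnD Hmem]].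
  assert (HnNA : ~ NA I1).
  { intros HNA. destruct (closure (fun i => In i I1)) as [P [HP Hc]].
    - intros I HI F HF e He. destruct (HNA F HF e He) as [P [HP HQ]]. exists P; split; auto.
    - apply HI0. exists P. intros i Hi. apply clos_Pi; auto. apply Hc. apply Hmem; auto. }
  assert (Hfar : exists F e, Forall A F /\ 0 < e /\ forall P, pba A P -> exists i, In i I1 /\
      forall Q, conv_types t i Q -> exists E, In E F /\ e <= Rabs (P E - Q E)).
  { apply NNPP; intros Hn. apply HnNA. intros F HF e He. apply NNPP; intros H1. apply Hn. exists F, e.
    split; auto; split; auto.
    intros P HP. apply NNPP; intros H2. apply H1. exists P. split; auto. intros i Hi. apply NNPP; intros H3.
    apply H2. exists i. split; auto.
    intros Q HQ. apply NNPP; intros H4. apply H3. exists Q. split; auto. intros E HE.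
    apply Rnot_le_lt. intros H5. apply H4. exists E; auto. }
  destruct Hfar as [F [e [HF [He Hfar]]]].
  destruct I1 as [|i0 I'].
  - destruct HT as [[j] _]. destruct (Hfar (t j w0) (Ht j w0)) as [i [[] _]].
  - destruct (separation w0 i0 I' HnD F HF e He Hfar) as [f [Hs [c [Hc Hsum]]]].
    exists (i0 :: I'), f. split; auto.
    change (integral A P0 (sumf f (i0 :: I')) < 0).
    rewrite (int_simple A HAf P0 HP0 [(c, setT)]).
    + rewrite int_sumL, sumL_cons, sumL_nil. cbn [fst snd]. destruct HP0 as [_ [_ H1]]. rewrite H1. lra.
    + constructor; [apply fT; auto|constructor].
    + intros w. rewrite Hsum, eval_sumL, sumL_cons, sumL_nil. cbn [fst snd]. rewrite ind_in by exact Logic.I. ring.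
Qed.

End TS.

Theorem theorem3 (N Omega : Type) (A : (Omega -> Prop) -> Prop)
  (M : N -> (Omega -> Prop) -> Prop) (t : N -> Omega -> (Omega -> Prop) -> R)
  (HT : type_space A M t) :
  (consistent A t \/ money_pump A t) /\ ~ (consistent A t /\ money_pump A t).
Proof.
  split.
  - destruct (classic (consistent A t)); [left; auto|right; apply (at_least N Omega A M t HT); auto].
  - intros [H1 H2]. apply (not_both N Omega A M t HT); auto.
Qed.
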